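(* Let $(G,k)$ be an instance of \textsc{Bicolored $P_3$ Deletion} and let $u,v,w,z$ be vertices such that $G[\{u,v,w,z\}]$ is an LC-Diamond, an LO-Diamond, or an IIZ-Diamond (with the vertex labels as in the definitions). Then $(G,k)$ is a yes-instance if and only if at least one of $(G-\{v,w\},k-1)$, $(G-\{\{u,v\},\{u,z\}\},k-2)$, $(G-\{\{u,v\},\{v,z\},\{w,z\}\},k-3)$ is a yes-instance.
   Context: A two-colored graph $G=(V,E_r,E_b)$ is a finite simple undirected graph whose edge set $E=E_r\uplus E_b$ is partitioned into red and blue edges; $G-F$ removes the edges in $F$ (and $G-\{v,w\}$ removes the single edge $\{v,w\}$). A bicolored $P_3$ is an induced subgraph on three vertices $a,b,c$ with edges $\{a,b\},\{b,c\}$ of different colors and $\{a,c\}\notin E$. The following are defined up to swapping the two colors (both versions count). An LC-Diamond on $u,v,w,z$: edges exactly $\{u,v\}$ blue, $\{v,w\}$ red, $\{u,z\}$ blue, $\{v,z\}$ red, $\{w,z\}$ blue. An LO-Diamond on $u,v,w,z$: edges exactly $\{u,v\}$ blue, $\{v,w\}$ red, $\{u,z\}$ blue, $\{v,z\}$ blue, $\{w,z\}$ red. An IIZ-Diamond on $u,v,w,z$: edges exactly $\{u,v\}$ blue, $\{v,w\}$ red, $\{u,z\}$ red, $\{v,z\}$ blue, $\{w,z\}$ blue. \textsc{Bicolored $P_3$ Deletion}: given $G$ and an integer $k$, decide whether some $S\subseteq E$ with $|S|\le k$ makes $G-S$ free of induced bicolored $P_3$s (no-instance if $k<0$). *)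

(* Defs.v *)
(* A two-colored graph on a finite vertex type V is given by
   two sets of edges Er (red) and Eb (blue); an edge is a 2-element set. *)
From mathcomp Require Import all_boot all_order ssralg ssrnum ssrint.
Set Implicit Arguments. Unset Strict Implicit. Unset Printing Implicit Defensive.
Import Order.TTheory GRing.Theory Num.Theory.

Section Defs.
Variable V : finType.
Implicit Types (Er Eb F : {set {set V}}) (u v w z a b c : V).

Definition two_colored Er Eb : Prop :=
  (forall e, e \in Er :|: Eb -> #|e| = 2) /\ [disjoint Er & Eb].

Definition edge (E : {set {set V}}) a b : bool := [set a; b] \in E.

(* G - F is represented as (Er :\: F, Eb :\: F). *)

Definition bicolored_P3 Er Eb a b c : Prop :=
  [/\ a != b, b != c, a != c,
      (edge Er a b && edge Eb b c) || (edge Eb a b && edge Er b c)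
    & ~~ edge (Er :|: Eb) a c].

Definition P3_free Er Eb : Prop := forall a b c, ~ bicolored_P3 Er Eb a b c.

Definition yes_instance Er Eb (k : int) : Prop :=
  exists S : {set {set V}},
    [/\ S \subset Er :|: Eb, (#|S|%:Z <= k)%R & P3_free (Er :\: S) (Eb :\: S)].

Definition distinct4 u v w z : bool :=
  [&& u != v, u != w, u != z, v != w, v != z & w != z].

(* Diamonds with colors "B" (blue) and "R" (red) as given; the swapped
   version is obtained by exchanging the arguments. {u,w} is a non-edge. *)
Definition LC_diamond R B u v w z : Prop :=
  [/\ distinct4 u v w z, ~~ edge (R :|: B) u w &
      [/\ edge B u v, edge R v w, edge B u z,
      edge R v z & edge B w z]].

Definition LO_diamond R B u v w z : Prop :=
  [/\ distinct4 u v w z, ~~ edge (R :|: B) u w &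
      [/\ edge B u v, edge R v w, edge B u z,
      edge B v z & edge R w z]].

Definition IIZ_diamond R B u v w z : Prop :=
  [/\ distinct4 u v w z, ~~ edge (R :|: B) u w &
      [/\ edge B u v, edge R v w, edge R u z,
      edge B v z & edge B w z]].

Definition some_diamond Er Eb u v w z : Prop :=
  [\/ LC_diamond Er Eb u v w z \/ LC_diamond Eb Er u v w z,
      LO_diamond Er Eb u v w z \/ LO_diamond Eb Er u v w z
    | IIZ_diamond Er Eb u v w z \/ IIZ_diamond Eb Er u v w z].

End Defs.

(* Main.v *)
Require Import Defs.
From mathcomp Require Import all_boot all_order ssralg ssrnum ssrint.
From mathcomp Require Import zify.
Import Order.TTheory GRing.Theory Num.Theory.

Section Aux.
Variable V : finType.
Implicit Types (Er Eb R B F S : {set {set V}}) (u v w z a b c : V).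

Lemma set2C a b : [set a; b] = [set b; a].
Proof. by rewrite setUC. Qed.

Lemma edgeC E a b : edge E a b = edge E b a.
Proof. by rewrite /edge set2C. Qed.

Lemma hit Er Eb S a b c : P3_free (Er :\: S) (Eb :\: S) ->
  a != b -> b != c -> a != c ->
  (edge Er a b && edge Eb b c) || (edge Eb a b && edge Er b c) ->
  ~~ edge (Er :|: Eb) a c || ([set a; c] \in S) ->
  [set a; b] \in S \/ [set b; c] \in S.
Proof.
move=> HF ab bc ac Hcol Hnac.
case Hab: ([set a; b] \in S); first by left.
case Hbc: ([set b; c] \in S); first by right.
exfalso; apply: (HF a b c); split => //.
  by move: Hcol; rewrite /edge !inE Hab Hbc.
move: Hnac; rewrite /edge !inE.
by case: ([set a; c] \in S); case: ([set a; c] \in Er); case: ([set a; c] \in Eb).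
Qed.

Definition concl S u v w z :=
  [set v; w] \in S \/ ([set u; v] \in S /\ [set u; z] \in S) \/
  ([set u; v] \in S /\ [set v; z] \in S /\ [set w; z] \in S).

Section Gen.
Variables (Er Eb R B S : {set {set V}}) (u v w z : V).
Hypothesis HF : P3_free (Er :\: S) (Eb :\: S).
Hypothesis Hc : forall a b c, (edge R a b && edge B b c) || (edge B a b && edge R b c) ->
  (edge Er a b && edge Eb b c) || (edge Eb a b && edge Er b c).
Hypothesis HU : R :|: B = Er :|: Eb.

Lemma LC_key : LC_diamond R B u v w z -> concl S u v w z.
Proof.
case=> /and5P[uv uw uz vw /andP[vz wz]] nuw [e1 e2 e3 e4 e5].
rewrite HU in nuw; rewrite /concl.
have c1 : (edge R u v && edge B v w) || (edge B u v && edge R v w) by rewrite e1 e2 orbT.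
have n1 : ~~ edge (Er :|: Eb) u w || ([set u; w] \in S) by rewrite nuw.
have [h1|h] := @hit Er Eb S u v w HF uv vw uw (Hc _ _ _ c1) n1; last by left.
have c2 : (edge R u z && edge B z v) || (edge B u z && edge R z v)
  by rewrite (edgeC R z v) e3 e4 orbT.
have n2 : ~~ edge (Er :|: Eb) u v || ([set u; v] \in S) by rewrite h1 orbT.
have zv : z != v by rewrite eq_sym.
have [h2|h] := @hit Er Eb S u z v HF uz zv uv (Hc _ _ _ c2) n2; first by right; left; split.
have c3 : (edge R v w && edge B w z) || (edge B v w && edge R w z) by rewrite e2 e5.
have n3 : ~~ edge (Er :|: Eb) v z || ([set v; z] \in S) by rewrite (set2C v z) h orbT.
have [h'|h3] := @hit Er Eb S v w z HF vw wz vz (Hc _ _ _ c3) n3; first by left.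
by right; right; rewrite (set2C v z).
Qed.
Lemma IIZ_key : IIZ_diamond R B u v w z -> concl S u v w z.
Proof.
case=> /and5P[uv uw uz vw /andP[vz wz]] nuw [e1 e2 e3 e4 e5].
rewrite HU in nuw; rewrite /concl.
have c1 : (edge R u v && edge B v w) || (edge B u v && edge R v w) by rewrite e1 e2 orbT.
have n1 : ~~ edge (Er :|: Eb) u w || ([set u; w] \in S) by rewrite nuw.
have [h1|h] := @hit Er Eb S u v w HF uv vw uw (Hc _ _ _ c1) n1; last by left.
have c2 : (edge R u z && edge B z v) || (edge B u z && edge R z v)
  by rewrite (edgeC B z v) e3 e4.
have n2 : ~~ edge (Er :|: Eb) u v || ([set u; v] \in S) by rewrite h1 orbT.
have zv : z != v by rewrite eq_sym.
have [h2|h] := @hit Er Eb S u z v HF uz zv uv (Hc _ _ _ c2) n2; first by right; left; split.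
have c3 : (edge R v w && edge B w z) || (edge B v w && edge R w z) by rewrite e2 e5.
have n3 : ~~ edge (Er :|: Eb) v z || ([set v; z] \in S) by rewrite (set2C v z) h orbT.
have [h'|h3] := @hit Er Eb S v w z HF vw wz vz (Hc _ _ _ c3) n3; first by left.
by right; right; rewrite (set2C v z).
Qed.

Lemma LO_key : LO_diamond R B u v w z -> concl S u v w z.
Proof.
case=> /and5P[uv uw uz vw /andP[vz wz]] nuw [e1 e2 e3 e4 e5].
rewrite HU in nuw; rewrite /concl.
have c1 : (edge R u v && edge B v w) || (edge B u v && edge R v w) by rewrite e1 e2 orbT.
have n1 : ~~ edge (Er :|: Eb) u w || ([set u; w] \in S) by rewrite nuw.
have [h1|h] := @hit Er Eb S u v w HF uv vw uw (Hc _ _ _ c1) n1; last by left.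
have c2 : (edge R u z && edge B z w) || (edge B u z && edge R z w)
  by rewrite (edgeC R z w) e3 e5 orbT.
have zw : z != w by rewrite eq_sym.
have [h2|h] := @hit Er Eb S u z w HF uz zw uw (Hc _ _ _ c2) n1; first by right; left; split.
have c3 : (edge R w v && edge B v z) || (edge B w v && edge R v z)
  by rewrite (edgeC R w v) e2 e4.
have n3 : ~~ edge (Er :|: Eb) w z || ([set w; z] \in S) by rewrite (set2C w z) h orbT.
have wv : w != v by rewrite eq_sym.
have [h'|h3] := @hit Er Eb S w v z HF wv vz wz (Hc _ _ _ c3) n3.
  by left; rewrite (set2C v w).
by right; right; rewrite (set2C w z).
Qed.
End Gen.

Lemma key Er Eb S u v w z : some_diamond Er Eb u v w z ->
  P3_free (Er :\: S) (Eb :\: S) -> concl S u v w z.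
Proof.
move=> HD HF.
have Hc1 : forall a b c, (edge Er a b && edge Eb b c) || (edge Eb a b && edge Er b c) ->
  (edge Er a b && edge Eb b c) || (edge Eb a b && edge Er b c) by [].
have Hc2 : forall a b c, (edge Eb a b && edge Er b c) || (edge Er a b && edge Eb b c) ->
  (edge Er a b && edge Eb b c) || (edge Eb a b && edge Er b c) by move=> a b c; rewrite orbC.
have HU1 : Er :|: Eb = Er :|: Eb by [].
have HU2 : Eb :|: Er = Er :|: Eb by rewrite setUC.
case: HD => [[]|[]|[]] H.
- exact: LC_key HF Hc1 HU1 H.
- exact: LC_key HF Hc2 HU2 H.
- exact: LO_key HF Hc1 HU1 H.
- exact: LO_key HF Hc2 HU2 H.
- exact: IIZ_key HF Hc1 HU1 H.
- exact: IIZ_key HF Hc2 HU2 H.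
Qed.

Lemma diam_facts Er Eb u v w z : some_diamond Er Eb u v w z ->
  distinct4 u v w z /\
  [/\ [set u; v] \in Er :|: Eb, [set v; w] \in Er :|: Eb, [set u; z] \in Er :|: Eb,
      [set v; z] \in Er :|: Eb & [set w; z] \in Er :|: Eb].
Proof.
by case=> [[]|[]|[]] [d _ [e1 e2 e3 e4 e5]]; move: e1 e2 e3 e4 e5;
  rewrite /edge => e1 e2 e3 e4 e5; split => //; split;
  rewrite inE ?e1 ?e2 ?e3 ?e4 ?e5 ?orbT.
Qed.

Lemma restrict Er Eb (k : int) F S : S \subset Er :|: Eb -> (#|S|%:Z <= k)%R ->
  P3_free (Er :\: S) (Eb :\: S) -> F \subset S ->
  yes_instance (Er :\: F) (Eb :\: F) (k - #|F|%:Z)%R.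
Proof.
move=> HS Hk HF FS; exists (S :\: F); split.
- apply/subsetP=> x; rewrite !inE => /andP[xF xS]; have := subsetP HS x xS.
  by rewrite !inE xF.
- have := cardsID F S; rewrite (setIidPr FS); move: Hk; lia.
- have E : forall X, X :\: F :\: (S :\: F) = X :\: S.
    move=> X; apply/setP=> x; rewrite !inE; have := subsetP FS x.
    by case: (x \in F); case: (x \in S); case: (x \in X) => //; move/(_ isT).
  by rewrite !E.
Qed.

Lemma extend Er Eb (k : int) F : F \subset Er :|: Eb ->
  yes_instance (Er :\: F) (Eb :\: F) (k - #|F|%:Z)%R -> yes_instance Er Eb k.
Proof.
move=> FE [S' [HS' Hk HF]]; exists (F :|: S'); split.
- rewrite subUset FE /=; apply: subset_trans HS' _; apply/subsetP=> x; rewrite !inE.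
  by case/orP=> /andP[_ ->]; rewrite ?orbT.
- have := cardsU F S'; move: Hk; lia.
- by rewrite -!setDDl.
Qed.

Lemma set2_neq a b c d : a \notin [set c; d] -> [set a; b] != [set c; d].
Proof.
move=> H; apply/negP => /eqP E; move: H; rewrite -E !inE eqxx //.
Qed.
End Aux.

Lemma set2_neq' (V : finType) (a b c d : V) : b \notin [set c; d] -> [set a; b] != [set c; d].
Proof. by rewrite (set2C _ a b); apply: set2_neq. Qed.

Theorem lemma6 (V : finType) (Er Eb : {set {set V}}) (k : int) (u v w z : V) :
  two_colored Er Eb ->
  some_diamond Er Eb u v w z ->
  (yes_instance Er Eb k <->
   [\/ (let F := [set [set v; w]] in
        yes_instance (Er :\: F) (Eb :\: F) (k - 1)%R),
       (let F := [set [set u; v]; [set u; z]] in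
        yes_instance (Er :\: F) (Eb :\: F) (k - 2)%R)
     | (let F := [set [set u; v]; [set v; z]; [set w; z]] in
        yes_instance (Er :\: F) (Eb :\: F) (k - 3)%R)]).
Proof.
move=> _ HD.
have [/and5P[uv uw uz vw /andP[vz wz]] [e1 e2 e3 e4 e5]] := diam_facts _ _ _ _ _ _ _ HD.
have C1 : #|[set [set v; w]]| = 1%N by rewrite cards1.
have C2 : #|[set [set u; v]; [set u; z]]| = 2%N.
  rewrite cards2 set2_neq' // !inE negb_or vz andbT eq_sym //.
have C3 : #|[set [set u; v]; [set v; z]; [set w; z]]| = 3%N.
  have n1 : [set u; v] != [set v; z] by rewrite set2_neq // !inE negb_or uv uz.
  have n2 : [set w; z] != [set u; v].
    by rewrite set2_neq // !inE negb_or eq_sym uw eq_sym vw.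
  have n3 : [set w; z] != [set v; z].
    by rewrite set2_neq // !inE negb_or eq_sym vw wz.
  by rewrite setUC cardsU1 cards2 n1 !inE negb_or n2 n3.
split.
- case=> S [HS Hk HF].
  case: (key _ _ _ _ _ _ _ _ HD HF) => [h|[[h1 h2]|[h1 [h2 h3]]]].
  + apply: Or31 => /=; rewrite -[1%R]/(Posz 1%N) -C1.
    by apply: (restrict _ _ _ _ _ _ HS Hk HF); rewrite sub1set.
  + apply: Or32 => /=; rewrite -[2%R]/(Posz 2%N) -C2.
    by apply: (restrict _ _ _ _ _ _ HS Hk HF); rewrite !subUset !sub1set h1 h2.
  + apply: Or33 => /=; rewrite -[3%R]/(Posz 3%N) -C3.
    by apply: (restrict _ _ _ _ _ _ HS Hk HF); rewrite !subUset !sub1set h1 h2 h3.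
- case => /= H.
  + apply: (extend _ _ _ _ [set [set v; w]]); first by rewrite sub1set.
    by rewrite C1.
  + apply: (extend _ _ _ _ [set [set u; v]; [set u; z]]).
      by rewrite !subUset !sub1set e1 e3.
    by rewrite C2.
  + apply: (extend _ _ _ _ [set [set u; v]; [set v; z]; [set w; z]]).
      by rewrite !subUset !sub1set e1 e4 e5.
    by rewrite C3.
Qed.
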